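(* Let $a>0$, $b>0$, $c>0$ and put $\Phi(x)={}_1F_2\left(a\,;b,c\,;-\frac{x^2}{4}\right)$. Suppose $\Phi$ alternates in sign on $(0,\infty)$ and let $z_1$ denote its first zero on $(0,\infty)$. Then for any $\gamma\ge0$, $0\le\delta<b$, $0\le\epsilon<c$, the function $$\Psi(x)={}_1F_2\left(a+\gamma\,;b-\delta,\,c-\epsilon\,;-\frac{x^2}{4}\right)$$ also alternates in sign and possesses at least one zero on $(0,z_1]$.
   Context: For $a,b,c>0$, ${}_1F_2\left(a\,;b,c\,;-\frac{x^2}{4}\right)=\sum_{k=0}^\infty \frac{(a)_k}{k!\,(b)_k(c)_k}\left(-\frac{x^2}{4}\right)^k$, where $(\alpha)_k=\Gamma(\alpha+k)/\Gamma(\alpha)$. ''Alternates in sign'' means takes both positive and negative values on $(0,\infty)$. *)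

(* Defs.v *)
From Stdlib Require Import Reals.
From Coquelicot Require Import Coquelicot.
Open Scope R_scope.

Fixpoint poch (alpha : R) (k : nat) : R :=
  match k with
  | O => 1
  | S k' => poch alpha k' * (alpha + INR k')
  end.

Definition F12_term (a b c x : R) (k : nat) : R :=
  poch a k / (INR (Factorial.fact k) * poch b k * poch c k) * (- x ^ 2 / 4) ^ k.

(* 1F2(a; b, c; -x^2/4) as the sum of its (everywhere convergent) series. *)
Definition F12 (a b c x : R) : R := Series (F12_term a b c x).

Definition alternates_in_sign (f : R -> R) : Prop :=
  (exists x, 0 < x /\ 0 < f x) /\ (exists y, 0 < y /\ f y < 0).

(* Main.v *)
Require Import Defs.
From Stdlib Require Import Reals Lra Lia Psatz Classical FunctionalExtensionality.
From Coquelicot Require Import Coquelicot.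
Open Scope R_scope.

Lemma poch_pos al k : 0 < al -> 0 < poch al k.
Proof. intros H; induction k; simpl. lra. apply Rmult_lt_0_compat; auto. pose proof (pos_INR k); lra. Qed.

Lemma poch_le al be k : 0 < al -> 0 <= be -> poch al k <= poch (al + be) k.
Proof. intros H1 H2; induction k; simpl. lra.
  pose proof (pos_INR k). pose proof (poch_pos al k H1).
  apply Rmult_le_compat; lra. Qed.

Fixpoint ff (x : R) (k : nat) : R :=
  match k with O => 1 | S k' => ff x k' * (x - INR k') end.

Lemma ff_succ x k : ff (x + 1) (S k) = (x + 1) * ff x k.
Proof. induction k. simpl. ring. change (ff (x+1) (S (S k))) with (ff (x+1) (S k) * (x + 1 - INR (S k))).
  rewrite IHk. change (ff x (S k)) with (ff x k * (x - INR k)). rewrite S_INR. ring. Qed.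

Lemma ff_zero (j k : nat) : (j < k)%nat -> ff (INR j) k = 0.
Proof. induction k; intros H. lia. simpl. destruct (Nat.eq_dec j k). subst; ring.
  rewrite IHk by lia. ring. Qed.

Lemma ff_pos (n k : nat) : (k <= n)%nat -> 0 < ff (INR n) k.
Proof. induction k; intros H; simpl. lra. apply Rmult_lt_0_compat. apply IHk; lia.
  apply Rlt_Rminus, lt_INR; lia. Qed.

Lemma is_series_scalR c a l : is_series a l -> is_series (fun n => c * a n) (c * l).
Proof. intros H. exact (is_series_scal_l c a l H). Qed.
Lemma is_series_scalR' c a l : is_series a l -> is_series (fun n => a n * c) (l * c).
Proof. intros H. eapply is_series_ext. intros n; apply Rmult_comm. rewrite Rmult_comm. now apply is_series_scalR. Qed.
Lemma is_series_plusR a b la lb : is_series a la -> is_series b lb -> is_series (fun n => a n + b n) (la + lb).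
Proof. intros H1 H2. exact (is_series_plus a b la lb H1 H2). Qed.
Lemma is_series_minusR a b la lb : is_series a la -> is_series b lb -> is_series (fun n => a n - b n) (la - lb).
Proof. intros H1 H2. exact (is_series_minus a b la lb H1 H2). Qed.

Section E.
Variables al be : R.
Fixpoint Ex (n : nat) (h : nat -> R) : R :=
  match n with
  | O => h O
  | S n' => Ex n' (fun j => ((be + INR n' - INR j) * h j + (al + INR j) * h (S j)) / (al + be + INR n'))
  end.

Hypothesis hal : 0 < al.
Hypothesis hbe : 0 <= be.

Lemma Ex_ext n h1 h2 : (forall j, h1 j = h2 j) -> Ex n h1 = Ex n h2.
Proof. intros H; f_equal; apply functional_extensionality; auto. Qed.

Lemma Ex_lin n c1 c2 h1 h2 : Ex n (fun j => c1 * h1 j + c2 * h2 j) = c1 * Ex n h1 + c2 * Ex n h2.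
Proof. revert h1 h2; induction n; intros h1 h2; simpl. ring.
  rewrite <- IHn. apply Ex_ext; intros j. assert (0 < al + be + INR n). { pose proof (pos_INR n); lra. }
  field. lra. Qed.

Lemma Ex_bound n h lo hi : (forall j, (j <= n)%nat -> lo <= h j <= hi) -> lo <= Ex n h <= hi.
Proof. revert h; induction n; intros h H; simpl. apply H; lia.
  apply IHn. intros j Hj. assert (0 < al + be + INR n). { pose proof (pos_INR n); lra. }
  assert (INR j <= INR n) by (apply le_INR; lia). pose proof (pos_INR j).
  destruct (H j ltac:(lia)), (H (S j) ltac:(lia)).
  split; [apply Rmult_le_reg_r with (al + be + INR n) | apply Rmult_le_reg_r with (al + be + INR n)]; auto;
  unfold Rdiv; rewrite Rmult_assoc, Rinv_l by lra; nra. Qed.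

Lemma Ex_series n (f : nat -> nat -> R) (s : nat -> R) :
  (forall j, is_series (f j) (s j)) -> is_series (fun k => Ex n (fun j => f j k)) (Ex n s).
Proof. revert f s; induction n; intros f s H; simpl. auto.
  apply (IHn (fun j k => ((be + INR n - INR j) * f j k + (al + INR j) * f (S j) k) / (al + be + INR n))).
  intros j. unfold Rdiv. apply is_series_scalR'. apply is_series_plusR; apply is_series_scalR; auto. Qed.

Lemma Ex_moment n k : Ex n (fun j => ff (INR j) k) = ff (INR n) k * (poch al k / poch (al + be) k).
Proof. revert k; induction n; intros k; cbn [Ex].
  - destruct k. simpl; field.
    rewrite (ff_zero 0 (S k)) by lia. ring.
  - assert (0 < al + be + INR n). { pose proof (pos_INR n); lra. }
    destruct k.
    + rewrite (Ex_ext n _ (fun j => ff (INR j) 0)). rewrite IHn. simpl; field.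
      intros j; simpl; field; lra.
    + rewrite (Ex_ext n _ (fun j => ((al+be+INR n + INR (S k))/(al+be+INR n)) * ff (INR j) (S k) + (INR (S k) * (al + INR k) / (al+be+INR n)) * ff (INR j) k)).
      rewrite Ex_lin, !IHn. 
      replace (INR (S n)) with (INR n + 1) by (rewrite S_INR; ring).
      rewrite ff_succ.
      change (ff (INR n) (S k)) with (ff (INR n) k * (INR n - INR k)).
      change (poch al (S k)) with (poch al k * (al + INR k)).
      change (poch (al+be) (S k)) with (poch (al+be) k * (al + be + INR k)).
      rewrite S_INR.
      assert (0 < poch (al + be) k) by (apply poch_pos; lra).
      assert (0 < al + be + INR k) by (pose proof (pos_INR k); lra).
      field; lra.
      intros j. rewrite S_INR, ff_succ.
      change (ff (INR j) (S k)) with (ff (INR j) k * (INR j - INR k)).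
      rewrite S_INR. field; lra.
Qed.
End E.

Lemma div_ge0 a b : 0 <= a -> 0 < b -> 0 <= a / b.
Proof. intros; unfold Rdiv; apply Rmult_le_pos; [auto | left; apply Rinv_0_lt_compat; auto]. Qed.
Lemma div_le1 a b : a <= b -> 0 < b -> a / b <= 1.
Proof. intros; apply Rmult_le_reg_r with b; auto. unfold Rdiv; rewrite Rmult_assoc, Rinv_l; lra. Qed.

Lemma q_bound n j k : (1 <= n)%nat -> (j <= n)%nat -> (k <= n)%nat ->
  0 <= ff (INR j) k / ff (INR n) k <= 1 /\
  - (INR k * INR k / INR n) <= (INR j / INR n)^k - ff (INR j) k / ff (INR n) k <= INR k * INR k / INR n.
Proof.
  intros Hn Hj. induction k as [|k IH]; intros Hk.
  - simpl. unfold Rdiv. rewrite Rmult_0_l, Rmult_0_l. rewrite Rinv_1. lra.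
  - destruct (IH ltac:(lia)) as [[Q0 Q1] [D0 D1]].
    assert (HN : 1 <= INR n) by (apply (le_INR 1); lia).
    assert (HK : INR k + 1 <= INR n) by (rewrite <- S_INR; apply le_INR; lia).
    assert (HX : INR j <= INR n) by (apply le_INR; lia).
    pose proof (pos_INR j). pose proof (pos_INR k).
    assert (Fn : 0 < ff (INR n) k) by (apply ff_pos; lia).
    set (q := ff (INR j) k / ff (INR n) k) in *.
    set (A := (INR j / INR n)^k) in *.
    set (x := INR j) in *. set (N := INR n) in *. set (K := INR k) in *.
    assert (E : ff x (S k) / ff N (S k) = q * ((x - K) / (N - K))).
    { change (ff x (S k)) with (ff x k * (x - K)). change (ff N (S k)) with (ff N k * (N - K)).
      unfold q. field. lra. }
    rewrite E. change ((x/N)^(S k)) with (x/N * A). rewrite S_INR. fold K.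
    assert (A0 : 0 <= A <= 1). { unfold A. split. apply pow_le. apply div_ge0; lra.
      rewrite <- (pow1 k). apply pow_incr. split. apply div_ge0; lra.
      apply div_le1; lra. }
    assert (T0 : 0 <= x / N <= 1). { split. apply div_ge0; lra. apply div_le1; lra. }
    assert (KN : 0 <= K / N). { apply div_ge0; lra. }
    assert (KK : K * K / N + K / N <= (K + 1) * (K + 1) / N).
    { replace ((K+1)*(K+1)/N) with (K*K/N + K/N + (K+1)/N) by (field; lra).
      assert (0 <= (K+1)/N) by (apply div_ge0; lra). lra. }
    assert (KK0 : 0 <= K * K / N). { apply div_ge0; nra. }
    destruct (Compare_dec.le_lt_dec k j) as [Hkj | Hkj].
    + assert (XK : K <= x) by (apply le_INR; lia).
      assert (R0 : 0 <= (x - K) / (N - K) <= 1). { split. apply div_ge0; lra. apply div_le1; lra. }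
      assert (D : 0 <= x / N - (x - K) / (N - K) <= K / N).
      { replace (x / N - (x - K) / (N - K)) with (K * (N - x) / (N * (N - K))) by (field; lra).
        split. apply div_ge0; nra.
        apply Rmult_le_reg_r with (N * (N - K)). nra. unfold Rdiv. rewrite Rmult_assoc, Rinv_l by nra.
        replace (K * / N * (N * (N - K))) with (K * (N - K)) by (field; lra). nra. }
      set (r := (x - K) / (N - K)) in *. set (t := x / N) in *.
      replace (t * A - q * r) with ((A - q) * t + q * (t - r)) by ring.
      split. split; nra. split; nra.
    + assert (q = 0). { unfold q, x. rewrite (ff_zero j k) by lia. unfold Rdiv; ring. }
      rewrite H1 in *. split. lra. split; nra.
Qed.

Lemma Ex_lower al be n h lo : 0 < al -> 0 <= be -> (forall j, (j <= n)%nat -> lo <= h j) -> lo <= Ex al be n h.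
Proof. intros hal hbe. revert h; induction n; intros h H; simpl. apply H; lia.
  apply IHn. intros j Hj. assert (0 < al + be + INR n). { pose proof (pos_INR n); lra. }
  assert (INR j <= INR n) by (apply le_INR; lia). pose proof (pos_INR j).
  pose proof (H j ltac:(lia)). pose proof (H (S j) ltac:(lia)).
  apply Rmult_le_reg_r with (al + be + INR n); auto.
  unfold Rdiv; rewrite Rmult_assoc, Rinv_l by lra; nra. Qed.

Lemma Ex_scal al be n c h : 0 < al -> 0 <= be -> Ex al be n (fun j => c * h j) = c * Ex al be n h.
Proof. intros. rewrite (Ex_ext al be n _ (fun j => c * h j + 0 * h j)) by (intros; ring).
  rewrite Ex_lin by auto. ring. Qed.

Lemma Ex_sub al be n h1 h2 : 0 < al -> 0 <= be -> Ex al be n (fun j => h1 j - h2 j) = Ex al be n h1 - Ex al be n h2.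
Proof. intros. rewrite (Ex_ext al be n _ (fun j => 1 * h1 j + (-1) * h2 j)) by (intros; ring).
  rewrite Ex_lin by auto. ring. Qed.

Lemma mk_bounds al be k : 0 < al -> 0 <= be -> 0 <= poch al k / poch (al+be) k <= 1.
Proof. intros. pose proof (poch_pos al k H). pose proof (poch_le al be k H H0).
  split. apply div_ge0; lra. apply div_le1; lra. Qed.

Lemma mom_est al be n k : 0 < al -> 0 <= be -> (1 <= n)%nat ->
  - (INR k * INR k / INR n) <= Ex al be n (fun j => (INR j / INR n)^k) - poch al k / poch (al+be) k
   <= INR k * INR k / INR n.
Proof.
  intros hal hbe Hn.
  assert (HN : 1 <= INR n) by (apply (le_INR 1); lia).
  destruct (Compare_dec.le_lt_dec k n) as [Hk | Hk].
  - assert (Fn : 0 < ff (INR n) k) by (apply ff_pos; lia).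
    assert (E : poch al k / poch (al+be) k = Ex al be n (fun j => / ff (INR n) k * ff (INR j) k)).
    { rewrite Ex_scal, Ex_moment by auto. field. split. apply Rgt_not_eq, poch_pos; lra. lra. }
    rewrite E, <- Ex_sub by auto. apply Ex_bound; auto. intros j Hj.
    destruct (q_bound n j k Hn Hj Hk) as [_ H]. unfold Rdiv in H |- *. rewrite (Rmult_comm (/ _)). exact H.
  - assert (H1 : 0 <= Ex al be n (fun j => (INR j / INR n)^k) <= 1).
    { apply Ex_bound; auto. intros j Hj. assert (INR j <= INR n) by (apply le_INR; lia). pose proof (pos_INR j).
      split. apply pow_le, div_ge0; lra. rewrite <- (pow1 k). apply pow_incr. split. apply div_ge0; lra. apply div_le1; lra. }
    pose proof (mk_bounds al be k hal hbe).
    assert (INR n + 1 <= INR k) by (rewrite <- S_INR; apply le_INR; lia).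
    assert (1 <= INR k * INR k / INR n). { apply Rmult_le_reg_r with (INR n). lra. unfold Rdiv. rewrite Rmult_assoc, Rinv_l by lra. nra. }
    lra.
Qed.

Lemma INR_le_pow2 k : INR k <= 2 ^ k.
Proof. induction k. simpl; lra. rewrite S_INR. simpl. assert (1 <= 2^k) by (apply pow_R1_Rle; lra). lra. Qed.

Lemma ps_is_series q v : (forall r, 0 <= r -> ex_series (fun k => Rabs (q k) * r^k)) ->
  is_series (fun k => q k * v^k) (PSeries q v).
Proof. intros H. apply Series_correct. apply ex_series_Rabs.
  eapply ex_series_ext. 2: apply (H (Rabs v)); apply Rabs_pos. intros k; simpl. rewrite Rabs_mult, RPow_abs; reflexivity. Qed.

Lemma ex_series_leR (a b : nat -> R) : (forall n, Rabs (a n) <= b n) -> ex_series b -> ex_series a.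
Proof. intros H1 H2. apply (@ex_series_le R_AbsRing R_CompleteNormedModule a b); auto. Qed.

Lemma transfer al be (q p : nat -> R) u m :
  0 < al -> 0 <= be ->
  (forall k, p k = poch al k / poch (al+be) k * q k) ->
  (forall r, 0 <= r -> ex_series (fun k => Rabs (q k) * r^k)) ->
  (forall t, 0 <= t <= 1 -> m <= PSeries q (t * u)) ->
  m <= PSeries p u.
Proof.
  intros hal hbe Hp Hq Hm.
  assert (Hpq : forall r, 0 <= r -> ex_series (fun k => Rabs (p k) * r^k)).
  { intros r hr. apply (ex_series_leR _ (fun k => Rabs (q k) * r^k)); [|apply Hq; auto].
    intros k. rewrite Rabs_mult, Rabs_Rabsolu, Hp, Rabs_mult. pose proof (mk_bounds al be k hal hbe).
    rewrite (Rabs_pos_eq (poch al k / _)) by lra. rewrite (Rabs_pos_eq (r^k)) by (apply pow_le; auto).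
    pose proof (Rabs_pos (q k)). pose proof (pow_le r k hr). set (mk := poch al k / poch (al + be) k) in *. apply Rmult_le_compat_r; auto. rewrite <- (Rmult_1_l (Rabs (q k))) at 2. apply Rmult_le_compat_r; lra. }
  set (bnd := fun k => Rabs (q k) * Rabs u ^ k * (INR k * INR k)).
  assert (exK : ex_series bnd).
  { apply (ex_series_leR _ (fun k => Rabs (q k) * (4 * Rabs u)^k)); [|apply Hq; pose proof (Rabs_pos u); lra].
    intros k. unfold bnd. pose proof (Rabs_pos (q k)). pose proof (pow_le (Rabs u) k (Rabs_pos u)).
    pose proof (pos_INR k).
    rewrite Rabs_pos_eq by (apply Rmult_le_pos; [apply Rmult_le_pos|]; nra).
    rewrite Rpow_mult_distr. replace 4 with (2*2) by ring. rewrite Rpow_mult_distr.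
    pose proof (INR_le_pow2 k). assert (INR k * INR k <= 2^k * 2^k) by nra.
    assert (0 <= Rabs (q k) * Rabs u ^ k) by (apply Rmult_le_pos; auto).
    replace (Rabs (q k) * (2 ^ k * 2 ^ k * Rabs u ^ k)) with (Rabs (q k) * Rabs u ^ k * (2 ^ k * 2 ^ k)) by ring.
    apply Rmult_le_compat_l; auto. }
  set (K := Series bnd).
  assert (K0 : 0 <= K).
  { assert (Z : Series (fun _ : nat => 0) = 0).
    { rewrite (Series_ext _ (fun n => (fun _ : nat => 0) n * 0)) by (intros; ring). rewrite Series_scal_r. ring. }
    rewrite <- Z. unfold K. apply Series_le; auto. intros k; split. lra. unfold bnd.
    apply Rmult_le_pos. apply Rmult_le_pos. apply Rabs_pos. apply pow_le, Rabs_pos. pose proof (pos_INR k); nra. }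
  assert (main : forall n, (1 <= n)%nat -> m - K / INR n <= PSeries p u).
  { intros n Hn. assert (HN : 1 <= INR n) by (apply (le_INR 1); lia).
    set (S := Ex al be n (fun j => PSeries q (INR j / INR n * u))).
    assert (mS : m <= S).
    { apply Ex_lower; auto. intros j Hj. apply Hm. assert (INR j <= INR n) by (apply le_INR; lia). pose proof (pos_INR j).
      split. apply div_ge0; lra. apply div_le1; lra. }
    assert (HS : is_series (fun k => q k * u^k * Ex al be n (fun j => (INR j/INR n)^k)) S).
    { eapply is_series_ext. 2: apply (Ex_series al be n (fun j k => q k * (INR j/INR n*u)^k)); intros j; apply ps_is_series; auto.
      intros k. simpl. rewrite (Ex_ext _ _ _ _ (fun j => (q k * u^k) * (INR j/INR n)^k)) by (intros; rewrite Rpow_mult_distr; ring).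
      apply Ex_scal; auto. }
    assert (HF : is_series (fun k => p k * u^k) (PSeries p u)) by (apply ps_is_series; auto).
    pose proof (is_series_minusR _ _ _ _ HS HF) as HD.
    set (d := fun k => q k * u ^ k * Ex al be n (fun j => (INR j / INR n) ^ k) - p k * u ^ k) in HD.
    assert (Bd : forall k, Rabs (d k) <= bnd k / INR n).
    { intros k. unfold d, bnd. rewrite Hp.
      replace (q k * u ^ k * Ex al be n (fun j => (INR j / INR n) ^ k) - poch al k / poch (al + be) k * q k * u ^ k)
        with (q k * u ^ k * (Ex al be n (fun j => (INR j / INR n) ^ k) - poch al k / poch (al + be) k)) by ring.
      rewrite !Rabs_mult, RPow_abs. pose proof (mom_est al be n k hal hbe Hn) as ME.
      assert (Rabs (Ex al be n (fun j => (INR j / INR n) ^ k) - poch al k / poch (al + be) k) <= INR k * INR k / INR n) by (apply Rabs_le; lra).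
      unfold Rdiv in *. rewrite !Rmult_assoc. apply Rmult_le_compat_l. apply Rabs_pos. apply Rmult_le_compat_l. apply Rabs_pos.
      rewrite <- Rmult_assoc. exact H. }
    assert (exB : ex_series (fun k => bnd k / INR n)).
    { eexists. apply is_series_scalR'. apply Series_correct. exact exK. }
    assert (exD : ex_series (fun k => Rabs (d k))).
    { apply (ex_series_leR _ (fun k => bnd k / INR n)); [|exact exB]. intros k. rewrite Rabs_Rabsolu. apply Bd. }
    assert (E1 : Series d = S - PSeries p u) by (apply is_series_unique; exact HD).
    assert (E2 : Rabs (Series d) <= K / INR n).
    { eapply Rle_trans. apply Series_Rabs; auto. unfold K, Rdiv. rewrite <- Series_scal_r.
      apply Series_le; auto. intros k; split. apply Rabs_pos. apply Bd. }
    rewrite E1 in E2. unfold Rabs in E2. destruct (Rcase_abs (S - PSeries p u)); lra. }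
  destruct (Rle_or_lt m (PSeries p u)) as [H|H]; auto. exfalso.
  set (e := m - PSeries p u).
  assert (He : 0 < e) by (unfold e; lra).
  destruct (archimed_cor1 (e / (K + 1))) as [N [HN1 HN2]].
  { apply Rdiv_lt_0_compat; lra. }
  pose proof (main N ltac:(lia)).
  assert (0 < INR N) by (apply lt_0_INR; lia).
  assert (K / INR N < e).
  { apply Rle_lt_trans with ((K + 1) * / INR N). unfold Rdiv. apply Rmult_le_compat_r. left; apply Rinv_0_lt_compat; auto. lra.
    apply Rmult_lt_reg_r with (/ (K+1)). apply Rinv_0_lt_compat; lra.
    replace ((K + 1) * / INR N * / (K + 1)) with (/ INR N) by (field; lra). exact HN1. }
  unfold e in *. lra.
Qed.

Definition coef (a b c : R) (k : nat) : R := poch a k / (INR (Factorial.fact k) * poch b k * poch c k).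

Lemma F12_PS a b c x : F12 a b c x = PSeries (coef a b c) (- x ^ 2 / 4).
Proof. reflexivity. Qed.

Lemma Series_ge0 (a : nat -> R) : (forall n, 0 <= a n) -> ex_series a -> 0 <= Series a.
Proof. intros H Hex.
  assert (Z : Series (fun _ : nat => 0) = 0).
  { rewrite (Series_ext _ (fun n => (fun _ : nat => 0) n * 0)) by (intros; ring). rewrite Series_scal_r. ring. }
  rewrite <- Z. apply Series_le; auto. intros; split; auto; lra. Qed.

Lemma sum_ge0 (a : nat -> R) n : (forall n, 0 <= a n) -> 0 <= sum_f_R0 a n.
Proof. intros H; induction n; simpl. auto. specialize (H (S n)); lra. Qed.

Lemma term_le_Series (a : nat -> R) n : (forall n, 0 <= a n) -> ex_series a -> a n <= Series a.
Proof. intros H Hex. rewrite (Series_incr_n a (S n)) by (auto; lia). simpl.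
  assert (0 <= Series (fun k => a (S (n + k)))).
  { apply Series_ge0. auto. apply (ex_series_incr_n a (S n)) in Hex. exact Hex. }
  destruct n. simpl in *. lra. rewrite tech5. pose proof (sum_ge0 a n H). lra. Qed.

Lemma poch_ratio_le a b k : 0 < a -> 0 < b -> poch a k <= (1 + a / b) ^ k * poch b k.
Proof. intros ha hb. induction k; simpl. lra.
  pose proof (pos_INR k). pose proof (poch_pos b k hb). pose proof (poch_pos a k ha).
  assert (a + INR k <= (1 + a / b) * (b + INR k)).
  { replace ((1 + a / b) * (b + INR k)) with (b + INR k + a + a / b * INR k) by (field; lra).
    assert (0 <= a / b * INR k) by (apply Rmult_le_pos; [apply div_ge0|]; lra). lra. }
  replace ((1 + a / b) * (1 + a / b) ^ k * (poch b k * (b + INR k))) with (((1 + a / b) ^ k * poch b k) * ((1 + a / b) * (b + INR k))) by ring.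
  apply Rmult_le_compat; lra. Qed.

Lemma poch_ge_pow c k : 0 < c -> c ^ k <= poch c k.
Proof. intros hc; induction k; simpl. lra. pose proof (pos_INR k). pose proof (pow_lt c k hc).
  rewrite Rmult_comm. apply Rmult_le_compat; lra. Qed.

Lemma coef_pos a b c k : 0 < a -> 0 < b -> 0 < c -> 0 < coef a b c k.
Proof. intros. unfold coef. apply Rdiv_lt_0_compat. apply poch_pos; auto.
  apply Rmult_lt_0_compat. apply Rmult_lt_0_compat. apply INR_fact_lt_0. apply poch_pos; auto. apply poch_pos; auto. Qed.

Lemma coef_series a b c : 0 < a -> 0 < b -> 0 < c ->
  forall r, 0 <= r -> ex_series (fun k => Rabs (coef a b c k) * r ^ k).
Proof.
  intros ha hb hc r hr. set (M := 1 + a / b).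
  assert (hM : 0 < M) by (unfold M; assert (0 < a/b) by (apply Rdiv_lt_0_compat; auto); lra).
  apply (ex_series_leR _ (fun k => (M / c * r) ^ k * / INR (Factorial.fact k))).
  - intros k. rewrite Rabs_mult, Rabs_Rabsolu, (Rabs_pos_eq (coef a b c k)) by (left; apply coef_pos; auto).
    rewrite (Rabs_pos_eq (r^k)) by (apply pow_le; auto).
    unfold Rdiv. rewrite !Rpow_mult_distr, pow_inv.
    pose proof (pow_le r k hr). pose proof (INR_fact_lt_0 k). pose proof (poch_pos b k hb). pose proof (poch_pos c k hc).
    pose proof (pow_lt c k hc). pose proof (poch_ratio_le a b k ha hb). pose proof (poch_ge_pow c k hc). fold M in H5.
    assert (coef a b c k <= M ^ k * / c ^ k * / INR (Factorial.fact k)).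
    { unfold coef. apply Rle_trans with (M ^ k * poch b k / (INR (Factorial.fact k) * poch b k * poch c k)).
      unfold Rdiv. apply Rmult_le_compat_r. left; apply Rinv_0_lt_compat. apply Rmult_lt_0_compat; [apply Rmult_lt_0_compat|]; auto. auto.
      replace (M ^ k * poch b k / (INR (Factorial.fact k) * poch b k * poch c k)) with (M ^ k * / poch c k * / INR (Factorial.fact k)) by (field; lra).
      apply Rmult_le_compat_r. left; apply Rinv_0_lt_compat; auto. apply Rmult_le_compat_l. left; apply pow_lt; auto.
      apply Rinv_le_contravar; auto. }
    replace (M ^ k * / c ^ k * r ^ k * / INR (Factorial.fact k)) with ((M ^ k * / c ^ k * / INR (Factorial.fact k)) * r ^ k) by ring.
    apply Rmult_le_compat_r; auto.
  - pose proof (is_exp_Reals (M / c * r)) as E. eexists. eapply is_series_ext. 2: exact E.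
    intros k. simpl. rewrite pow_n_pow. unfold scal; simpl. unfold mult; simpl. ring.
Qed.

Lemma coef_radius a b c y : 0 < a -> 0 < b -> 0 < c -> Rbar_lt (Rabs y) (CV_radius (coef a b c)).
Proof.
  intros ha hb hc. set (r := Rabs y + 1). assert (hr : 0 <= r) by (unfold r; pose proof (Rabs_pos y); lra).
  assert (Rbar_le r (CV_radius (coef a b c))).
  { apply (proj1 (CV_radius_bounded (coef a b c))). exists (Series (fun k => Rabs (coef a b c k) * r ^ k)).
    intros n. rewrite Rabs_mult, (Rabs_pos_eq (r ^ n)) by (apply pow_le; auto).
    apply (term_le_Series (fun k => Rabs (coef a b c k) * r ^ k)).
    intros; apply Rmult_le_pos; [apply Rabs_pos | apply pow_le; auto]. apply coef_series; auto. }
  eapply Rbar_lt_le_trans. 2: exact H. simpl. unfold r; lra. Qed.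

Lemma F12_cont a b c : 0 < a -> 0 < b -> 0 < c -> continuity (fun x => F12 a b c x).
Proof. intros ha hb hc x.
  apply (continuity_pt_comp (fun x => - x ^ 2 / 4) (PSeries (coef a b c))).
  reg. apply PSeries_continuity. apply coef_radius; auto. Qed.

Lemma F12_at0 a b c : F12 a b c 0 = 1.
Proof. rewrite F12_PS. replace (- 0 ^ 2 / 4) with 0 by (simpl; field). rewrite PSeries_0.
  unfold coef; simpl; field. Qed.

Lemma step al be (q p : nat -> R) U m :
  0 < al -> 0 <= be ->
  (forall k, p k = poch al k / poch (al+be) k * q k) ->
  (forall r, 0 <= r -> ex_series (fun k => Rabs (q k) * r^k)) ->
  (forall t, 0 <= t <= 1 -> m <= PSeries q (t * U)) ->
  (forall t, 0 <= t <= 1 -> m <= PSeries p (t * U)).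
Proof. intros hal hbe Hp Hq Hm t Ht. apply (transfer al be q p); auto.
  intros s Hs. rewrite <- Rmult_assoc. apply Hm. split. apply Rmult_le_pos; lra.
  rewrite <- (Rmult_1_l 1). apply Rmult_le_compat; lra. Qed.

Lemma chain (a b c gamma delta epsilon X m : R)
  (ha : 0 < a) (hb : 0 < b) (hc : 0 < c)
  (hgamma : 0 <= gamma) (hdelta : 0 <= delta < b) (heps : 0 <= epsilon < c) :
  0 <= X -> (forall x, 0 <= x <= X -> m <= F12 (a + gamma) (b - delta) (c - epsilon) x) ->
  m <= F12 a b c X.
Proof.
  intros HX H. set (U := - X ^ 2 / 4).
  assert (P1 : forall t, 0 <= t <= 1 -> m <= PSeries (coef (a+gamma) (b-delta) (c-epsilon)) (t * U)).
  { intros t Ht.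
    replace (t * U) with (- (X * sqrt t) ^ 2 / 4).
    2: { unfold U. simpl. rewrite !Rmult_1_r. replace (X * sqrt t * (X * sqrt t)) with (X * X * (sqrt t * sqrt t)) by ring.
         rewrite sqrt_sqrt by lra. field. }
    rewrite <- F12_PS. apply H. split. apply Rmult_le_pos; auto. apply sqrt_pos.
    rewrite <- (Rmult_1_r X) at 2. apply Rmult_le_compat_l; auto. rewrite <- sqrt_1. apply sqrt_le_1_alt; lra. }
  assert (P2 : forall t, 0 <= t <= 1 -> m <= PSeries (coef (a+gamma) b (c-epsilon)) (t * U)).
  { apply (step (b - delta) delta (coef (a+gamma) (b-delta) (c-epsilon))); auto; try lra.
    intros k. replace (b - delta + delta) with b by ring. unfold coef.
    pose proof (INR_fact_lt_0 k). pose proof (poch_pos b k hb). pose proof (poch_pos (b - delta) k ltac:(lra)).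
    pose proof (poch_pos (c - epsilon) k ltac:(lra)). field. lra.
    apply coef_series; lra. }
  assert (P3 : forall t, 0 <= t <= 1 -> m <= PSeries (coef (a+gamma) b c) (t * U)).
  { apply (step (c - epsilon) epsilon (coef (a+gamma) b (c-epsilon))); auto; try lra.
    intros k. replace (c - epsilon + epsilon) with c by ring. unfold coef.
    pose proof (INR_fact_lt_0 k). pose proof (poch_pos b k hb). pose proof (poch_pos (c - epsilon) k ltac:(lra)).
    pose proof (poch_pos c k hc). field. lra.
    apply coef_series; lra. }
  assert (P4 : forall t, 0 <= t <= 1 -> m <= PSeries (coef a b c) (t * U)).
  { apply (step a gamma (coef (a+gamma) b c)); auto; try lra.
    intros k. unfold coef.
    pose proof (INR_fact_lt_0 k). pose proof (poch_pos b k hb). pose proof (poch_pos (a + gamma) k ltac:(lra)).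
    pose proof (poch_pos c k hc). field. lra.
    apply coef_series; lra. }
  rewrite F12_PS. fold U. rewrite <- (Rmult_1_l U). apply P4. lra.
Qed.

Theorem lemma2 (a b c z1 gamma delta epsilon : R)
  (ha : 0 < a) (hb : 0 < b) (hc : 0 < c)
  (halt : alternates_in_sign (fun x => F12 a b c x))
  (hz1pos : 0 < z1) (hz1 : F12 a b c z1 = 0)
  (hz1first : forall x, 0 < x < z1 -> F12 a b c x <> 0)
  (hgamma : 0 <= gamma) (hdelta : 0 <= delta < b) (heps : 0 <= epsilon < c) :
  alternates_in_sign (fun x => F12 (a + gamma) (b - delta) (c - epsilon) x) /\
  exists z, 0 < z <= z1 /\ F12 (a + gamma) (b - delta) (c - epsilon) z = 0.
Proof.
  set (Psi := fun x => F12 (a + gamma) (b - delta) (c - epsilon) x).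
  assert (Hc : continuity Psi) by (apply F12_cont; lra).
  assert (H0 : Psi 0 = 1) by (apply F12_at0).
  assert (IVTz : forall x, 0 < x -> Psi x <= 0 -> exists z, 0 < z <= x /\ Psi z = 0).
  { intros x Hx Hpx. destruct (IVT_cor Psi 0 x Hc ltac:(lra) ltac:(rewrite H0; lra)) as [z [Hz1 Hz2]].
    exists z. split; auto. destruct (Req_dec z 0). subst z. rewrite H0 in Hz2. lra. lra. }
  assert (Zero : exists z, 0 < z <= z1 /\ Psi z = 0).
  { apply NNPP. intros Hno.
    assert (Hpos : forall x, 0 <= x <= z1 -> 0 < Psi x).
    { intros x Hx. destruct (Rlt_or_le 0 (Psi x)) as [h|h]; auto. exfalso.
      destruct (Req_dec x 0). subst x. rewrite H0 in h. lra.
      destruct (IVTz x ltac:(lra) h) as [z [Hz1 Hz2]]. apply Hno. exists z. split; auto; lra. }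
    destruct (continuity_ab_min Psi 0 z1 ltac:(lra) (fun c _ => Hc c)) as [mx [Hmx1 Hmx2]].
    pose proof (Hpos mx Hmx2).
    pose proof (chain a b c gamma delta epsilon z1 (Psi mx) ha hb hc hgamma hdelta heps ltac:(lra)
      (fun x Hx => Hmx1 x Hx)).
    lra. }
  split; [|exact Zero].
  split.
  - destruct (continuous_neq_0 Psi 0 (Hc 0) ltac:(rewrite H0; lra)) as [eps Heps].
    exists (eps / 2). pose proof (cond_pos eps). split. lra.
    destruct (Rlt_or_le 0 (Psi (eps/2))) as [h|h]; auto. exfalso.
    destruct (IVTz (eps/2) ltac:(lra) h) as [z [Hz1 Hz2]].
    apply (Heps z). rewrite Rabs_pos_eq; lra. rewrite Rplus_0_l. exact Hz2.
  - apply NNPP. intros Hno. destruct halt as [_ [y [Hy1 Hy2]]].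
    assert (0 <= F12 a b c y).
    { apply (chain a b c gamma delta epsilon y 0 ha hb hc hgamma hdelta heps ltac:(lra)).
      intros x Hx. destruct (Req_dec x 0). subst x. fold (Psi 0). rewrite H0. lra.
      destruct (Rle_or_lt 0 (Psi x)) as [h|h]; auto. exfalso. apply Hno. exists x. split; auto. lra. }
    simpl in Hy2. lra.
Qed.
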